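(* Every self-residual wqo is transferable.
   Context: A wqo is a quasi-order with no infinite bad sequence. The width $\mathbf{w}(A)$ is the rank of the forest of nonempty finite sequences of pairwise incomparable elements of $A$ ordered by initial segment. For $x\in A$, $A_{\not\le x}=\{y\in A: y\not\le x\}$, and for $Y\subseteq A$, $A_{\not\le Y}=\bigcap_{x\in Y}A_{\not\le x}$ (equal to $A$ if $Y=\emptyset$), with the induced order. $A$ is self-residual if for every $x\in A$, $A_{\not\le x}$ contains a substructure isomorphic to $A$. $A$ is transferable if $\mathbf{w}(A_{\not\le Y})=\mathbf{w}(A)$ for every finite $Y\subseteq A$. *)

(* Defs.v *)
From Stdlib Require Import List.
Import ListNotations.
Set Implicit Arguments.

Section Defs.
Variable T : Type.
Variable le : T -> T -> Prop.

Definition quasi_order : Prop :=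
  (forall x, le x x) /\ (forall x y z, le x y -> le y z -> le x z).

Definition wqo : Prop :=
  quasi_order /\
  forall f : nat -> T, exists i j, i < j /\ le (f i) (f j).

Definition incomp (x y : T) : Prop := ~ le x y /\ ~ le y x.

(* Forest of nonempty finite sequences of pairwise incomparable elements of
   the substructure P, ordered by initial segment; we add the empty sequence
   as a virtual root.  [child P s t]: t is a one-element extension of s
   that is still a sequence of pairwise incomparable elements of P.
   The nodes reachable from [] are exactly the pairwise-incomparable
   sequences of elements of P. *)
Definition child (P : T -> Prop) (s t : list T) : Prop :=
  exists x, t = s ++ [x] /\ P x /\ Forall (fun y => incomp y x) s.

Definition not_below (x : T) : T -> Prop := fun y => ~ le y x.
Definition not_below_set (Y : list T) : T -> Prop :=
  fun y => forall x, In x Y -> ~ le y x.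

Definition self_residual : Prop :=
  forall x, exists f : T -> T,
    (forall a b, f a = f b -> a = b) /\
    (forall a, not_below x (f a)) /\
    (forall a b, le a b <-> le (f a) (f b)).
End Defs.

(* Comparison of ordinal ranks of nodes of two well-founded trees:
   rk(s) <= rk(u) iff every child s' of s has a child u' of u with
   rk(s') <= rk(u')  (since rk(s) = sup {rk(s')+1}). *)
Inductive rank_le (A B : Type) (cA : list A -> list A -> Prop)
    (cB : list B -> list B -> Prop) : list A -> list B -> Prop :=
| rank_le_intro s u :
    (forall s', cA s s' -> exists u', cB u u' /\ rank_le cA cB s' u') ->
    rank_le cA cB s u.

(* width w(P) <= w(Q): rank of the forest of P-antichain sequences
   (= rank of its virtual root []) is at most that of Q. *)
Definition width_le (T : Type) (le : T -> T -> Prop) (P Q : T -> Prop) : Prop :=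
  rank_le (child le P) (child le Q) [] [].

Definition width_eq (T : Type) (le : T -> T -> Prop) (P Q : T -> Prop) : Prop :=
  width_le le P Q /\ width_le le Q P.

Definition transferable (T : Type) (le : T -> T -> Prop) : Prop :=
  forall Y : list T, width_eq le (not_below_set le Y) (fun _ => True).

(* Main.v *)
Require Import Defs.
From Stdlib Require Import List Lia Arith Classical IndefiniteDescription.
Import ListNotations.

Lemma acc_all (T : Type) (le : T -> T -> Prop) (P : T -> Prop) :
  wqo le -> forall s, Acc (fun t s => child le P s t) s.
Proof.
  intros [_ Hw] s. apply NNPP; intro Hs.
  set (R := fun t s => child le P s t) in *.
  assert (Hstep : forall s, ~ Acc R s -> exists t, R t s /\ ~ Acc R t).
  { intros s0 H0. apply NNPP; intro Hn. apply H0. constructor. intros t Ht.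
    apply NNPP; intro Ht'. apply Hn. eauto. }
  assert (step : forall x : {s | ~ Acc R s}, {y : {s | ~ Acc R s} | R (proj1_sig y) (proj1_sig x)}).
  { intros [s0 H0]. destruct (constructive_indefinite_description _ (Hstep s0 H0)) as [t [Ht1 Ht2]].
    exists (exist _ t Ht2). exact Ht1. }
  set (h := fix h n := match n with 0 => exist (fun s => ~ Acc R s) s Hs | S n => proj1_sig (step (h n)) end).
  assert (Hch : forall n, child le P (proj1_sig (h n)) (proj1_sig (h (S n)))).
  { intro n. simpl. exact (proj2_sig (step (h n))). }
  assert (Hx : forall n, {x | proj1_sig (h (S n)) = proj1_sig (h n) ++ [x] /\ P x /\
               Forall (fun y => incomp le y x) (proj1_sig (h n))}).
  { intro n. apply constructive_indefinite_description. apply Hch. }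
  set (xs := fun n => proj1_sig (Hx n)).
  assert (Hin : forall i j, i < j -> In (xs i) (proj1_sig (h j))).
  { intros i j; induction j; intro Hij; [lia|].
    destruct (proj2_sig (Hx j)) as [E _]. fold (xs j) in E. rewrite E.
    apply in_or_app. destruct (Nat.eq_dec i j) as [->|Hne].
    - right. left. reflexivity.
    - left. apply IHj. lia. }
  destruct (Hw xs) as [i [j [Hij Hle]]].
  destruct (proj2_sig (Hx j)) as [_ [_ Hall]]. fold (xs j) in Hall.
  rewrite Forall_forall in Hall. destruct (Hall _ (Hin i j Hij)) as [H1 _]. auto.
Qed.

Lemma sim (T : Type) (le : T -> T -> Prop) (P P' : T -> Prop) (g : T -> T) :
  (forall a b, le (g a) (g b) -> le a b) -> (forall a, P a -> P' (g a)) ->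
  forall s, Acc (fun t s => child le P s t) s ->
  rank_le (child le P) (child le P') s (map g s).
Proof.
  intros Hr HP s Hacc. induction Hacc as [s _ IH]. constructor.
  intros s' Hc. exists (map g s'). split; [| apply IH; exact Hc].
  destruct Hc as [x [Hs' [Px Hall]]]. subst s'.
  exists (g x). rewrite map_app. split; [reflexivity|]. split; [auto|].
  apply Forall_map. eapply Forall_impl; [|exact Hall].
  intros y [H1 H2]. split; intro H; eauto.
Qed.

Lemma iter_add (T : Type) (f : T -> T) a b x :
  Nat.iter (a + b) f x = Nat.iter a f (Nat.iter b f x).
Proof. induction a; simpl; congruence. Qed.

Lemma iter_iff (T : Type) (le : T -> T -> Prop) (f : T -> T) :
  (forall a b, le a b <-> le (f a) (f b)) ->
  forall n a b, le a b <-> le (Nat.iter n f a) (Nat.iter n f b).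
Proof.
  intros Hf n; induction n; intros a b; simpl; [tauto|].
  rewrite IHn. apply Hf.
Qed.

Lemma period (T : Type) (le : T -> T -> Prop) (f : T -> T) :
  wqo le -> (forall a b, le a b <-> le (f a) (f b)) ->
  forall c, exists p, 1 <= p /\ le c (Nat.iter p f c).
Proof.
  intros [_ Hw] Hf c. destruct (Hw (fun k => Nat.iter k f c)) as [i [j [Hij Hle]]].
  exists (j - i). split; [lia|].
  replace j with (i + (j - i)) in Hle by lia. rewrite iter_add in Hle.
  apply (@iter_iff T le f Hf i). exact Hle.
Qed.

Lemma mult_le (T : Type) (le : T -> T -> Prop) (f : T -> T) :
  quasi_order le -> (forall a b, le a b <-> le (f a) (f b)) ->
  forall c p, le c (Nat.iter p f c) -> forall k, le c (Nat.iter (k * p) f c).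
Proof.
  intros [Hrefl Htr] Hf c p Hp k. induction k; simpl; [apply Hrefl|].
  rewrite iter_add. eapply Htr; [exact Hp|]. exact (proj1 (@iter_iff T le f Hf p _ _) IHk).
Qed.

Fixpoint Mseq (T : Type) (b : nat -> T) (p : T -> nat) (k : nat) : nat :=
  match k with 0 => 1 | S k => @Mseq T b p k * p (b (@Mseq T b p k)) end.

Lemma pres_one (T : Type) (le : T -> T -> Prop) (f : T -> T) :
  wqo le -> (forall a b, le a b <-> le (f a) (f b)) ->
  forall z, exists m, 1 <= m /\ forall b, ~ le b z -> ~ le (Nat.iter m f b) z.
Proof.
  intros Hwqo Hf z. apply NNPP; intro Hn.
  assert (H : forall m, 1 <= m -> exists b, ~ le b z /\ le (Nat.iter m f b) z).
  { intros m Hm. apply NNPP; intro Hb. apply Hn. exists m. split; auto.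
    intros b Hbz Hle. apply Hb; eauto. }
  destruct (H 1 (le_n 1)) as [b0 _].
  assert (Hex : forall m, exists b, 1 <= m -> ~ le b z /\ le (Nat.iter m f b) z).
  { intro m. destruct m. - exists b0. intro; lia.
    - destruct (H (S m)) as [b Hb]; [lia|]. exists b; auto. }
  set (bsel := fun m => proj1_sig (constructive_indefinite_description _ (Hex m))).
  assert (Hb : forall m, 1 <= m -> ~ le (bsel m) z /\ le (Nat.iter m f (bsel m)) z).
  { intro m. exact (proj2_sig (constructive_indefinite_description _ (Hex m))). }
  pose proof (@period T le f Hwqo Hf) as Hp0.
  set (psel := fun c => proj1_sig (constructive_indefinite_description _ (Hp0 c))).
  assert (Hp : forall c, 1 <= psel c /\ le c (Nat.iter (psel c) f c)).
  { intro c. exact (proj2_sig (constructive_indefinite_description _ (Hp0 c))). }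
  assert (HM : forall k, 1 <= @Mseq T bsel psel k).
  { induction k; simpl; [lia|]. pose proof (proj1 (Hp (bsel (@Mseq T bsel psel k)))). nia. }
  assert (Hdiv : forall i j, i < j -> exists q, @Mseq T bsel psel j = q * psel (bsel (@Mseq T bsel psel i))).
  { intros i j; induction j; intro Hij; [lia|].
    destruct (Nat.eq_dec i j) as [->|Hne].
    - exists (@Mseq T bsel psel j). reflexivity.
    - destruct IHj as [q Hq]; [lia|]. exists (q * psel (bsel (@Mseq T bsel psel j))).
      simpl. rewrite Hq. ring. }
  destruct Hwqo as [[Hrefl Htr] Hw].
  destruct (Hw (fun k => bsel (@Mseq T bsel psel k))) as [i [j [Hij Hle]]].
  destruct (Hdiv i j Hij) as [q Hq].
  destruct (Hb _ (HM i)) as [Hci _].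
  destruct (Hb _ (HM j)) as [_ Hcj].
  apply Hci.
  pose proof (@mult_le T le f (conj Hrefl Htr) Hf _ _ (proj2 (Hp (bsel (@Mseq T bsel psel i)))) q) as H1.
  rewrite <- Hq in H1.
  eapply Htr; [exact H1|]. eapply Htr; [|exact Hcj].
  apply (@iter_iff T le f Hf). exact Hle.
Qed.

Lemma pres_mult (T : Type) (le : T -> T -> Prop) (f : T -> T) z m :
  (forall b, ~ le b z -> ~ le (Nat.iter m f b) z) ->
  forall k b, ~ le b z -> ~ le (Nat.iter (k * m) f b) z.
Proof.
  intros H k; induction k; intros b Hb; simpl; [exact Hb|].
  rewrite iter_add. apply H. apply IHk. exact Hb.
Qed.

Lemma pres_list (T : Type) (le : T -> T -> Prop) (f : T -> T) :
  wqo le -> (forall a b, le a b <-> le (f a) (f b)) ->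
  forall Z, exists m, 1 <= m /\ forall z b, In z Z -> ~ le b z -> ~ le (Nat.iter m f b) z.
Proof.
  intros Hw Hf Z; induction Z as [|z Z IH].
  - exists 1. split; [lia|]. intros z b [].
  - destruct IH as [m2 [Hm2 H2]]. destruct (@pres_one T le f Hw Hf z) as [m1 [Hm1 H1]].
    exists (m2 * m1). split; [nia|]. intros z' b [Heq|Hin] Hb.
    + subst z'. apply (@pres_mult T le f z m1 H1 m2). exact Hb.
    + rewrite Nat.mul_comm. apply (@pres_mult T le f z' m2 (fun b => H2 z' b Hin) m1). exact Hb.
Qed.

Lemma construct (T : Type) (le : T -> T -> Prop) :
  wqo le -> self_residual le -> forall Y, exists g : T -> T,
    (forall a b, le (g a) (g b) -> le a b) /\ (forall a y, In y Y -> ~ le (g a) y).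
Proof.
  intros Hw Hsr Y; induction Y as [|y Y IH].
  - exists (fun a => a). split; [auto|]. intros a y [].
  - destruct IH as [g0 [Hr0 Hy0]]. destruct (Hsr y) as [f [_ [Hnb Hf]]].
    destruct (@pres_list T le f Hw Hf Y) as [m [Hm Hpres]].
    exists (fun a => Nat.iter m f (g0 a)). split.
    + intros a b H. apply Hr0. apply (@iter_iff T le f Hf m). exact H.
    + intros a z [Heq|Hin]; [subst z|].
      * destruct m as [|m']; [lia|]. simpl. apply Hnb.
      * apply Hpres; auto.
Qed.

Theorem mainTheorem4 (T : Type) (le : T -> T -> Prop) :
  wqo le -> self_residual le -> transferable le.
Proof.
  intros Hw Hsr Y. split.
  - exact (@sim T le (not_below_set le Y) (fun _ => True) (fun x => x) (fun a b H => H)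
             (fun _ _ => I) [] (@acc_all T le _ Hw [])).
  - destruct (@construct T le Hw Hsr Y) as [g [Hr Hy]].
    exact (@sim T le (fun _ => True) (not_below_set le Y) g Hr
             (fun a _ => fun x Hx => Hy a x Hx) [] (@acc_all T le _ Hw [])).
Qed.
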